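(* There exist a real $3\times 3$ matrix $A$ and a real $1\times 3$ matrix $B$ such that the non-termination set $\mathrm{NT}=\{\vec{x}\in\mathbb{R}^3: BA^k\vec{x}\ge 0 \text{ for all integers } k\ge 0\}$ of the loop ''while $(B\vec{x}\ge 0)$ $\{\vec{x}:=A\vec{x}\}$'' is not a semi-algebraic set. In particular, non-termination sets of homogeneous simple linear loops with more than two variables cannot in general be defined by Tarski formulae.
   Context: A semi-algebraic subset of $\mathbb{R}^n$ is a set of the form $\bigcup_{i=1}^s\bigcap_{j=1}^{r_i}\{\vec{x}\in\mathbb{R}^n: f_{i,j}(\vec{x})\,\triangleleft_{i,j}\,0\}$ with finitely many polynomials $f_{i,j}\in\mathbb{R}[x_1,\dots,x_n]$ and $\triangleleft_{i,j}\in\{<,=\}$; these are exactly the sets definable by Tarski formulae (Boolean combinations of polynomial equalities and inequalities). *)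

(* Defs.v *)
From Stdlib Require Import Reals List.
Import ListNotations.
Open Scope R_scope.

Inductive idx3 : Set := I0 | I1 | I2.

Definition vec3 := idx3 -> R.
Definition mat33 := idx3 -> idx3 -> R.
Definition row3 := idx3 -> R.

Definition matvec (A : mat33) (x : vec3) : vec3 :=
  fun i => A i I0 * x I0 + A i I1 * x I1 + A i I2 * x I2.

Definition rowvec (B : row3) (x : vec3) : R :=
  B I0 * x I0 + B I1 * x I1 + B I2 * x I2.

Definition matpow_vec (A : mat33) (k : nat) (x : vec3) : vec3 :=
  Nat.iter k (matvec A) x.

Definition NT (A : mat33) (B : row3) : vec3 -> Prop :=
  fun x => forall k : nat, 0 <= rowvec B (matpow_vec A k x).

Inductive poly3 : Type :=
| PVar : idx3 -> poly3
| PConst : R -> poly3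
| PAdd : poly3 -> poly3 -> poly3
| PMul : poly3 -> poly3 -> poly3.

Fixpoint peval (p : poly3) (x : vec3) : R :=
  match p with
  | PVar i => x i
  | PConst c => c
  | PAdd p q => peval p x + peval q x
  | PMul p q => peval p x * peval q x
  end.

Definition atom_holds (a : poly3 * bool) (x : vec3) : Prop :=
  let (f, strict) := a in
  if strict then peval f x < 0 else peval f x = 0.

Definition semialgebraic (S : vec3 -> Prop) : Prop :=
  exists L : list (list (poly3 * bool)),
    forall x : vec3,
      S x <-> Exists (fun c => Forall (fun a => atom_holds a x) c) L.

(* Main.v *)
Require Import Defs.
From Stdlib Require Import Reals List Lra Lia.
Import ListNotations.
Open Scope R_scope.

Fixpoint ev (l : list R) (t : R) : R :=
  match l with [] => 0 | a :: l' => a + t * ev l' t end.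

Fixpoint ladd (l1 l2 : list R) : list R :=
  match l1, l2 with
  | [], _ => l2
  | _, [] => l1
  | a :: l1', b :: l2' => (a + b) :: ladd l1' l2'
  end.

Lemma ev_add l1 l2 t : ev (ladd l1 l2) t = ev l1 t + ev l2 t.
Proof.
  revert l2; induction l1 as [|a l1 IH]; intros [|b l2]; simpl; try ring.
  rewrite IH; ring.
Qed.

Definition lscale (a : R) (l : list R) := map (fun x => a * x) l.

Lemma ev_scale a l t : ev (lscale a l) t = a * ev l t.
Proof. induction l as [|b l IH]; simpl; [ring|]. rewrite IH; ring. Qed.

Fixpoint lmul (l1 l2 : list R) : list R :=
  match l1 with
  | [] => []
  | a :: l1' => ladd (lscale a l2) (0 :: lmul l1' l2)
  end.

Lemma ev_mul l1 l2 t : ev (lmul l1 l2) t = ev l1 t * ev l2 t.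
Proof.
  induction l1 as [|a l1 IH]; simpl; [ring|].
  rewrite ev_add, ev_scale; simpl; rewrite IH; ring.
Qed.

Lemma ev_bound l : exists M, 0 <= M /\ forall t, 0 < t < 1 -> Rabs (ev l t) <= M.
Proof.
  induction l as [|a l IH]; simpl.
  - exists 0; split; [lra|]; intros; rewrite Rabs_R0; lra.
  - destruct IH as [M [HM H]]. exists (Rabs a + M); split.
    + pose proof (Rabs_pos a); lra.
    + intros t Ht. eapply Rle_trans; [apply Rabs_triang|].
      rewrite Rabs_mult. specialize (H t Ht).
      rewrite (Rabs_right t) by lra.
      pose proof (Rabs_pos (ev l t)). nra.
Qed.

Lemma germ l : exists e, 0 < e /\
  ((forall t, 0 < t < e -> ev l t = 0) \/
   (forall t, 0 < t < e -> ev l t > 0) \/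
   (forall t, 0 < t < e -> ev l t < 0)).
Proof.
  induction l as [|a l IH]; simpl.
  - exists 1; split; [lra|]; left; auto.
  - destruct (Req_dec a 0) as [Ha|Ha].
    + subst a. destruct IH as [e [He [H|[H|H]]]]; exists e; split; auto.
      * left; intros t Ht; rewrite (H t Ht); ring.
      * right; left; intros t Ht; specialize (H t Ht); nra.
      * right; right; intros t Ht; specialize (H t Ht); nra.
    + destruct (ev_bound l) as [M [HM HB]].
      assert (Hpa : 0 < Rabs a) by (apply Rabs_pos_lt; auto).
      exists (Rmin 1 (Rabs a / (M + 1))).
      assert (Hq : 0 < Rabs a / (M + 1)) by (apply Rdiv_lt_0_compat; lra).
      split. { apply Rmin_glb_lt; lra. }
      assert (key : forall t, 0 < t < Rmin 1 (Rabs a / (M + 1)) -> Rabs (t * ev l t) < Rabs a).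
      { intros t [Ht1 Ht2].
        pose proof (Rmin_l 1 (Rabs a / (M + 1))).
        pose proof (Rmin_r 1 (Rabs a / (M + 1))).
        assert (Hb := HB t ltac:(lra)).
        rewrite Rabs_mult, (Rabs_right t) by lra.
        assert (t * (M + 1) < Rabs a).
        { assert (t < Rabs a / (M+1)) by lra.
          apply (Rmult_lt_compat_r (M+1)) in H1; [|lra].
          unfold Rdiv in H1. rewrite Rmult_assoc, Rinv_l in H1 by lra. lra. }
        pose proof (Rabs_pos (ev l t)). nra. }
      destruct (Rlt_or_le 0 a) as [Hp|Hn].
      * right; left. intros t Ht. specialize (key t Ht).
        rewrite (Rabs_right a) in key by lra.
        pose proof (Rle_abs (- (t * ev l t))). rewrite Rabs_Ropp in H. lra.
      * right; right. intros t Ht. specialize (key t Ht).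
        rewrite (Rabs_left1 a) in key by lra.
        pose proof (Rle_abs (t * ev l t)). lra.
Qed.

Definition Cst (P : R -> Prop) := exists e, 0 < e /\
  ((forall t, 0 < t < e -> P t) \/ (forall t, 0 < t < e -> ~ P t)).

Lemma Cst_iff (P Q : R -> Prop) : (forall t, P t <-> Q t) -> Cst P -> Cst Q.
Proof.
  intros H [e [He [H1|H1]]]; exists e; split; auto; [left|right]; intros t Ht;
    specialize (H1 t Ht); firstorder.
Qed.

Lemma Cst_const (P : Prop) : Cst (fun _ => P).
Proof.
  exists 1; split; [lra|]. destruct (Classical_Prop.classic P); [left|right]; auto.
Qed.

Lemma Cst_and P Q : Cst P -> Cst Q -> Cst (fun t => P t /\ Q t).
Proof.
  intros [e1 [He1 H1]] [e2 [He2 H2]]. exists (Rmin e1 e2).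
  split; [apply Rmin_glb_lt; auto|].
  assert (A : forall t, 0 < t < Rmin e1 e2 -> 0 < t < e1 /\ 0 < t < e2).
  { intros t Ht; pose proof (Rmin_l e1 e2); pose proof (Rmin_r e1 e2); lra. }
  destruct H1 as [H1|H1]; destruct H2 as [H2|H2];
  [left|right|right|right]; intros t Ht; destruct (A t Ht) as [Ha Hb];
  specialize (H1 t Ha); specialize (H2 t Hb); tauto.
Qed.

Lemma Cst_or P Q : Cst P -> Cst Q -> Cst (fun t => P t \/ Q t).
Proof.
  intros [e1 [He1 H1]] [e2 [He2 H2]]. exists (Rmin e1 e2).
  split; [apply Rmin_glb_lt; auto|].
  assert (A : forall t, 0 < t < Rmin e1 e2 -> 0 < t < e1 /\ 0 < t < e2).
  { intros t Ht; pose proof (Rmin_l e1 e2); pose proof (Rmin_r e1 e2); lra. }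
  destruct H1 as [H1|H1]; destruct H2 as [H2|H2];
  [left|left|left|right]; intros t Ht; destruct (A t Ht) as [Ha Hb];
  specialize (H1 t Ha); specialize (H2 t Hb); tauto.
Qed.

Lemma Cst_Forall {T} (Q : T -> R -> Prop) (c : list T) :
  (forall a, Cst (Q a)) -> Cst (fun t => Forall (fun a => Q a t) c).
Proof.
  intros HQ; induction c as [|a c IH].
  - apply (Cst_iff (fun _ => True)); [intros; split; auto|apply Cst_const].
  - apply (Cst_iff (fun t => Q a t /\ Forall (fun a => Q a t) c)).
    + intros; symmetry; apply Forall_cons_iff.
    + apply Cst_and; auto.
Qed.

Lemma Cst_Exists {T} (Q : T -> R -> Prop) (c : list T) :
  (forall a, Cst (Q a)) -> Cst (fun t => Exists (fun a => Q a t) c).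
Proof.
  intros HQ; induction c as [|a c IH].
  - apply (Cst_iff (fun _ => False)); [intros; split; [tauto|apply Exists_nil]|apply Cst_const].
  - apply (Cst_iff (fun t => Q a t \/ Exists (fun a => Q a t) c)).
    + intros; symmetry; apply Exists_cons.
    + apply Cst_or; auto.
Qed.

Definition curve (t : R) : vec3 :=
  fun i => match i with I0 => 15/16 | I1 => -2 * t | I2 => t * t end.

Lemma peval_poly p : exists l, forall t, peval p (curve t) = ev l t.
Proof.
  induction p as [i|c|p IHp q IHq|p IHp q IHq].
  - destruct i.
    + exists [15/16]; intros; simpl; ring.
    + exists [0; -2]; intros; simpl; ring.
    + exists [0; 0; 1]; intros; simpl; ring.
  - exists [c]; intros; simpl; ring.
  - destruct IHp as [l1 H1], IHq as [l2 H2]; exists (ladd l1 l2); intros; simpl.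
    rewrite ev_add, H1, H2; auto.
  - destruct IHp as [l1 H1], IHq as [l2 H2]; exists (lmul l1 l2); intros; simpl.
    rewrite ev_mul, H1, H2; auto.
Qed.

Lemma Cst_atom a : Cst (fun t => atom_holds a (curve t)).
Proof.
  destruct a as [f strict]. destruct (peval_poly f) as [l Hl].
  destruct (germ l) as [e [He [H|[H|H]]]]; exists e; split; auto;
  unfold atom_holds; destruct strict; rewrite ?Hl;
  solve [left; intros t Ht; rewrite Hl; specialize (H t Ht); lra
        |right; intros t Ht; rewrite Hl; specialize (H t Ht); lra].
Qed.

Definition Amat : mat33 := fun i j =>
  match i, j with I0, I0 => 1 | I1, I1 => 2 | I2, I2 => 4 | _, _ => 0 end.
Definition Brow : row3 := fun _ => 1.

Lemma pow_Amat k x :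
  matpow_vec Amat k x I0 = x I0 /\ matpow_vec Amat k x I1 = 2 ^ k * x I1 /\
  matpow_vec Amat k x I2 = 2 ^ k * 2 ^ k * x I2.
Proof.
  induction k as [|k [H0 [H1 H2]]]; unfold matpow_vec in *.
  - simpl; repeat split; ring.
  - change (Nat.iter (S k) (matvec Amat) x) with (matvec Amat (Nat.iter k (matvec Amat) x)).
    set (y := Nat.iter k (matvec Amat) x) in *.
    unfold matvec; simpl. rewrite H0, H1, H2. repeat split; ring.
Qed.

Lemma NT_curve t : NT Amat Brow (curve t) <->
  forall k : nat, 0 <= (t * 2 ^ k - 1) ^ 2 - 1/16.
Proof.
  unfold NT, rowvec, Brow.
  split; intros H k; specialize (H k); destruct (pow_Amat k (curve t)) as [H0 [H1 H2]];
  rewrite H0, H1, H2 in *; simpl in *; nra.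
Qed.

Lemma half_pow d : 0 < (/2) ^ d <= 1.
Proof. induction d; simpl; lra. Qed.

Lemma half_two m : (/2) ^ m * 2 ^ m = 1.
Proof. rewrite <- Rpow_mult_distr, Rinv_l by lra. apply pow1. Qed.

Lemma out_pt m : ~ NT Amat Brow (curve ((/2) ^ m)).
Proof.
  rewrite NT_curve; intros H; specialize (H m). rewrite half_two in H. lra.
Qed.

Lemma in_pt m : NT Amat Brow (curve (11/8 * (/2) ^ m)).
Proof.
  rewrite NT_curve; intros k.
  assert (0 < 2 ^ k) by (apply pow_lt; lra).
  destruct (Compare_dec.le_lt_dec m k) as [Hk|Hk].
  - replace k with (m + (k - m))%nat by lia. rewrite pow_add.
    pose proof (pow_R1_Rle 2 (k - m) ltac:(lra)).
    pose proof (half_two m).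
    assert (0 < 2 ^ m) by (apply pow_lt; lra).
    assert (11/8 * (/2)^m * (2^m * 2^(k-m)) = 11/8 * 2^(k-m)) by
      (replace (11/8 * (/2)^m * (2^m * 2^(k-m))) with (11/8 * ((/2)^m * 2^m) * 2^(k-m)) by ring;
       rewrite half_two; ring).
    rewrite H3. nra.
  - replace m with (k + S (m - k - 1))%nat by lia. rewrite pow_add.
    pose proof (half_two k). pose proof (half_pow (m - k - 1)).
    assert (11/8 * ((/2)^k * (/2)^(S (m-k-1))) * 2^k = 11/16 * (/2)^(m-k-1)) by
      (replace (11/8 * ((/2)^k * (/2)^(S (m-k-1))) * 2^k) with
         (11/8 * ((/2)^k * 2^k) * (/2)^(S (m-k-1))) by ring;
       rewrite H0; simpl; field).
    rewrite H2. nra.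
Qed.

Theorem theorem2 :
  exists (A : mat33) (B : row3), ~ semialgebraic (NT A B).
Proof.
  exists Amat, Brow. intros [L HL].
  assert (C : Cst (fun t => NT Amat Brow (curve t))).
  { apply (Cst_iff (fun t => Exists (fun c => Forall (fun a => atom_holds a (curve t)) c) L)).
    - intros t; symmetry; apply HL.
    - apply Cst_Exists; intros c; apply Cst_Forall; intros a; apply Cst_atom. }
  destruct C as [e [He H]].
  destruct (pow_lt_1_zero (/2) ltac:(rewrite Rabs_right; lra) (e * (8/11)) ltac:(lra))
    as [N HN].
  specialize (HN N (le_n N)). pose proof (half_pow N).
  rewrite Rabs_right in HN by lra.
  destruct H as [H|H].
  - apply (out_pt N); apply (H ((/2)^N)); split; lra.
  - apply (H (11/8 * (/2)^N)); [split; lra|apply in_pt].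
Qed.
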